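(* If $G$ is a finite simple unmixed graph without induced $4$-cycles, then $I_c(G)$ is linearly presented.
   Context: $G$ has vertices $t_1,\dots,t_s$, $S=K[t_1,\dots,t_s]$, $K$ a field. $G$ is unmixed if all minimal vertex covers (inclusion-minimal vertex sets meeting every edge) have equal size. $I_c(G)$ is the ideal generated by $\prod_{t_i\in C}t_i$ over the minimal vertex covers $C$ of $G$. A monomial ideal minimally generated by $u_1,\dots,u_r$ is linearly presented if all $u_i$ have the same degree and the kernel of $S^r\to S$, $e_i\mapsto u_i$, is generated by vectors whose entries are linear forms. *)

(* Defs.v *)
From mathcomp Require Import all_boot all_algebra.
From mathcomp Require Import mpoly.
Set Implicit Arguments. Unset Strict Implicit. Unset Printing Implicit Defensive.
Import GRing.Theory.
Local Open Scope ring_scope.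

Definition simple_graph (s : nat) (E : rel 'I_s) : Prop :=
  ssrbool.symmetric E /\ ssrbool.irreflexive E.

Definition vertex_cover (s : nat) (E : rel 'I_s) (C : {set 'I_s}) : bool :=
  [forall x, forall y, E x y ==> ((x \in C) || (y \in C))].

Definition minimal_vertex_cover (s : nat) (E : rel 'I_s) (C : {set 'I_s}) : bool :=
  minset (vertex_cover E) C.

Definition unmixed (s : nat) (E : rel 'I_s) : Prop :=
  forall C D : {set 'I_s}, minimal_vertex_cover E C -> minimal_vertex_cover E D ->
    #|C| = #|D|.

Definition has_induced_C4 (s : nat) (E : rel 'I_s) : Prop :=
  exists a b c d : 'I_s,
    [/\ uniq [:: a; b; c; d],
        [&& E a b, E b c, E c d & E d a] &
        ~~ E a c && ~~ E b d].

Definition ideal_gen (s : nat) (K : fieldType) (gens : {mpoly K[s]} -> Prop)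
  (p : {mpoly K[s]}) : Prop :=
  exists (k : nat) (a g : 'I_k -> {mpoly K[s]}),
    (forall j, gens (g j)) /\ p = \sum_(j < k) a j * g j.

Definition cover_ideal {s : nat} (K : fieldType) (E : rel 'I_s) : {mpoly K[s]} -> Prop :=
  ideal_gen (fun u => exists C : {set 'I_s},
                 minimal_vertex_cover E C /\ u = \prod_(i in C) 'X_i).

(* a linear form: homogeneous polynomial of degree 1 (0 allowed) *)
Definition linear_form (s : nat) (K : fieldType) (p : {mpoly K[s]}) : bool :=
  all (fun m : 'X_{1..s} => mdeg m == 1%N) (msupp p).

Definition syzygy (s : nat) (K : fieldType) (r : nat) (u : 'I_r -> {mpoly K[s]})
  (v : 'I_r -> {mpoly K[s]}) : Prop :=
  \sum_(i < r) v i * u i = 0.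

Definition linearly_presented (s : nat) (K : fieldType) (I : {mpoly K[s]} -> Prop) : Prop :=
  exists (r : nat) (m : 'I_r -> 'X_{1..s}),
    let u := fun i => ('X_[m i] : {mpoly K[s]}) in
    [/\
        (forall p, I p <-> ideal_gen (fun q => exists i, q = u i) p),
        (forall i, ~ ideal_gen (fun q => exists2 j, j != i & q = u j) (u i)),
        (forall i j, mdeg (m i) = mdeg (m j)) &
        exists (k : nat) (w : 'I_k -> 'I_r -> {mpoly K[s]}),
          (forall l, syzygy u (w l)) /\
          (forall l i, linear_form (w l i)) /\
          (forall v, syzygy u v ->
             exists c : 'I_k -> {mpoly K[s]},
               forall i, v i = \sum_(l < k) c l * w l i)].
Arguments cover_ideal {s} K E _.

(* Main.v *)
Require Import Defs.
From mathcomp Require Import all_boot all_algebra.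
From mathcomp Require Import mpoly.
From mathcomp Require Import zify.
Set Implicit Arguments. Unset Strict Implicit. Unset Printing Implicit Defensive.
Import GRing.Theory.

Section Comb.
Variables (s : nat) (E : rel 'I_s).
Hypothesis Hsimple : simple_graph E.
Hypothesis Hunm : unmixed E.
Hypothesis HnoC4 : ~ has_induced_C4 E.

Local Notation vc := (vertex_cover E).
Local Notation mvc := (minimal_vertex_cover E).

Lemma Esym x y : E x y = E y x.
Proof. by case: Hsimple => h _; apply: h. Qed.

Lemma Eirr x : E x x = false.
Proof. by case: Hsimple => _ h; apply: h. Qed.

Lemma vcP (C : {set 'I_s}) : reflect (forall x y, E x y -> (x \in C) || (y \in C)) (vc C).
Proof.
apply: (iffP forallP) => [h x y exy | h x].
  by move: (h x) => /forallP /(_ y) /implyP; apply.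
by apply/forallP => y; apply/implyP; apply: h.
Qed.

Lemma mvc_vc (C : {set 'I_s}) : mvc C -> vc C.
Proof. exact: minsetp. Qed.

Lemma mvc_min (C B : {set 'I_s}) : mvc C -> vc B -> B \subset C -> B = C.
Proof. exact: minsetinf. Qed.

Lemma exists_mvc (Q : {set 'I_s}) : vc Q -> exists2 M, mvc M & M \subset Q.
Proof. by move=> h; case: (minset_exists h) => M h1 h2; exists M. Qed.

Lemma mvc_card (C Q : {set 'I_s}) : mvc C -> vc Q -> #|Q| = #|C| -> mvc Q.
Proof.
move=> hC hQ hc; case: (exists_mvc hQ) => M hM sMQ.
have hMC := Hunm hM hC.
have -> : Q = M; last by [].
apply/eqP; rewrite eq_sym eqEcard sMQ /=; by rewrite hMC hc.
Qed.

Lemma mvc_out (C : {set 'I_s}) v : mvc C -> v \in C -> exists u, u \notin C /\ E v u.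
Proof.
move=> hC vC.
case: (boolP [exists u, (u \notin C) && E v u]).
  by case/existsP => u /andP [h1 h2]; exists u.
rewrite negb_exists => /forallP hn.
have hvc : vc (C :\ v).
  apply/vcP => x y exy; rewrite !in_setD1.
  have := (vcP _ (mvc_vc hC)) x y exy.
  case/orP => [xC | yC].
    case: (eqVneq x v) => [xv | xv]; last by apply/orP; left; apply/andP.
    subst x; case: (eqVneq y v) => [yv|yv]; first by subst y; rewrite Eirr in exy.
    have := hn y; rewrite exy andbT negbK => yC; by apply/orP; right; apply/andP.
  case: (eqVneq y v) => [yv | yv]; last by apply/orP; right; apply/andP.
  subst y; case: (eqVneq x v) => [xv|xv]; first by subst x; rewrite Eirr in exy.
  have := hn x; rewrite Esym exy andbT negbK => xC; by apply/orP; left; apply/andP.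
have := mvc_min hC hvc (subD1set C v) => h.
by move: vC; rewrite -h setD11.
Qed.

Lemma mvc_cardD (C D : {set 'I_s}) : mvc C -> mvc D -> #|C :\: D| = #|D :\: C|.
Proof. by move=> hC hD; rewrite !cardsD setIC (Hunm hC hD). Qed.

Lemma mvc_neq (C D : {set 'I_s}) : mvc C -> mvc D -> C != D -> exists y, y \in C :\: D.
Proof.
move=> hC hD hne; case: (set_0Vmem (C :\: D)) => [h0 | [y hy]]; last by exists y.
have sCD : C \subset D by rewrite -setD_eq0 h0.
move: hne; have -> : C = D; last by rewrite eqxx.
by apply/eqP; rewrite eqEcard sCD /= (Hunm hD hC).
Qed.

Lemma chain (U : {set 'I_s}) (Rel : {set 'I_s} -> {set 'I_s} -> Prop) :
  (forall P, mvc P -> Rel P P) ->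
  (forall P Q Q', mvc Q -> Rel P Q -> Rel Q Q' -> Rel P Q') ->
  (forall P a b, mvc P -> mvc (b |: (P :\ a)) -> a \in P -> b \notin P ->
      P \subset U -> b |: (P :\ a) \subset U -> Rel P (b |: (P :\ a))) ->
  forall C D, mvc C -> mvc D -> C \subset U -> D \subset U -> Rel C D.
Proof.
move=> Hrefl Htrans Hswap C D hC hD sCU sDU.
move: {2}#|C :\: D| (leqnn #|C :\: D|) => n.
elim: n C D hC hD sCU sDU => [|n IH] C D hC hD sCU sDU hn.
  case: (eqVneq C D) => [<-|hne]; first exact: Hrefl.
  case: (mvc_neq hC hD hne) => y hy.
  by move: hn; rewrite leqn0 cards_eq0 => /eqP h0; rewrite h0 inE in hy.
case: (eqVneq C D) => [<-|hne]; first exact: Hrefl.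
case: (mvc_neq hC hD hne) => y hy.
have yC : y \in C by move: hy; rewrite inE => /andP [].
have yD : y \notin D by move: hy; rewrite inE => /andP [].
have vcC := vcP _ (mvc_vc hC).
have vcD := vcP _ (mvc_vc hD).
set N := [set a | (a \notin C) && E y a].
have sND : N \subset D :\: C.
  apply/subsetP => a; rewrite !inE => /andP [aC eya]; rewrite aC /=.
  by have := vcD _ _ eya; rewrite (negbTE yD).
set Q := (C :\ y) :|: N.
have vcQ : vc Q.
  apply/vcP => a b eab; rewrite !inE.
  case: (eqVneq a y) => [ay|ay].
    subst a; case: (boolP (b \in C)) => bC.
      have by_ : b != y by apply: contraTneq eab => ->; rewrite Eirr.
      by rewrite by_ !orbT.
    by rewrite /= eab !orbT.
  case: (eqVneq b y) => [bya|bya].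
    subst b; case: (boolP (a \in C)) => aC; first by [].
    by rewrite /= Esym eab.
  by case/orP: (vcC _ _ eab) => ->; rewrite ?orbT.
case: (exists_mvc vcQ) => M hM sMQ.
have vcM := vcP _ (mvc_vc hM).
have yM : y \notin M.
  apply/negP => /(subsetP sMQ); rewrite !inE eqxx /= yC /=; by [].
have sNM : N \subset M.
  apply/subsetP => a; rewrite inE => /andP [_ eya].
  by have := vcM _ _ eya; rewrite (negbTE yM).
have sMCN : M :\: C \subset N.
  apply/subsetP => a; rewrite inE => /andP [aC /(subsetP sMQ)].
  by rewrite !inE (negbTE aC) andbF.
have sMU : M \subset U.
  apply/subsetP => a /(subsetP sMQ); rewrite !inE => /orP [/andP [_ aC]|aN].
    exact: (subsetP sCU).
  apply: (subsetP sDU); have : a \in N by rewrite inE.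
  by move/(subsetP sND); rewrite inE => /andP [].
have cardCD : #|C :\: D| = #|D :\: C| := mvc_cardD hC hD.
have RMD : Rel M D.
  apply: IH => //.
  have : M :\: D \subset (C :\: D) :\ y.
    apply/subsetP => a; rewrite !inE => /andP [aD aM].
    move: (subsetP sMQ a aM); rewrite !inE => /orP [/andP [ay aC]|/andP [aC eya]].
      by rewrite ay aD aC.
    have : a \in N by rewrite inE aC eya.
    by move/(subsetP sND); rewrite inE (negbTE aD) andbF.
  move/subset_leq_card => h; apply: (leq_trans h).
  by move: hn; rewrite (cardsD1 y (C :\: D)) hy.
case: (ltnP #|N| #|D :\: C|) => hNcard.
  apply: (Htrans _ M) => //; apply: IH => //.
  rewrite (mvc_cardD hC hM); have := subset_leq_card sMCN => h.
  apply: (leq_trans h); rewrite -ltnS; apply: (leq_trans hNcard); by rewrite -cardCD.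
have eN : N = D :\: C.
  by apply/eqP; rewrite eqEcard sND hNcard.
case: (leqP #|C :\: D| 1) => h1.
  have cCD1 : #|C :\: D| = 1.
    by apply/eqP; rewrite eqn_leq h1 /= card_gt0; apply/set0Pn; exists y.
  move: (cCD1); rewrite cardCD => /eqP/cards1P [a ha].
  have aDC : a \in D :\: C by rewrite ha set11.
  have aC : a \notin C by move: aDC; rewrite inE => /andP [].
  have eD : D = a |: (C :\ y).
    apply/setP => x; rewrite !inE.
    case: (eqVneq x a) => [->|xa] /=.
      by move: aDC; rewrite inE => /andP [].
    case: (boolP (x \in D)) => xD.
      case: (boolP (x \in C)) => xC.
        by rewrite andbT; apply/esym/eqP => xy; move: yD; rewrite -xy xD.
      have : x \in D :\: C by rewrite inE xC xD.
      by rewrite ha inE (negbTE xa).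
    case: (eqVneq x y) => //= xy; apply/esym/negbTE.
    apply/negP => xC.
    have : x \in C :\: D by rewrite inE xC xD.
    move/eqP: (cCD1) => /cards1P [b hb]; rewrite hb inE => /eqP xb.
    by move: hy; rewrite hb inE => /eqP yb; move: xy; rewrite xb yb eqxx.
  rewrite eD; apply: Hswap => //; by rewrite -eD.
have eMC : M :\: C = N.
  apply/eqP; rewrite eqEsubset sMCN /=; apply/subsetP => a aN.
  rewrite inE (subsetP sNM _ aN) andbT.
  by move: aN; rewrite inE => /andP [].
have cCM : #|C :\: M| = #|C :\: D|.
  by rewrite (mvc_cardD hC hM) eMC eN cardCD.
have yCM : y \in C :\: M by rewrite inE yM.
have : 0 < #|(C :\: M) :\ y|.
  by move: h1; rewrite -cCM (cardsD1 y (C :\: M)) yCM.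
rewrite card_gt0 => /set0Pn [z]; rewrite !inE => /andP [zy /andP [zM zC]].
case: (mvc_out hC zC) => x [xC ezx].
have nbrN : forall x', x' \notin C -> E z x' -> x' \in N.
  move=> x' x'C ezx'; rewrite -eMC inE x'C /=.
  by have := vcM _ _ ezx'; rewrite (negbTE zM).
have xN := nbrN _ xC ezx.
have uniqx : forall x', x' \notin C -> E z x' -> x' = x.
  move=> x' x'C ezx'; apply/eqP/negPn/negP => hx'.
  apply: HnoC4; exists y, x, z, x'.
  have x'N := nbrN _ x'C ezx'.
  move: (xN) (x'N); rewrite !inE => /andP [_ eyx] /andP [_ eyx'].
  split.
  - rewrite /= !inE !negb_or.
    have yx : y != x by apply: contraNneq xC => <-.
    have yx' : y != x' by apply: contraNneq x'C => <-.
    have zx : x != z by apply: contraNneq xC => ->.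
    have zx' : z != x' by apply: contraNneq x'C => <-.
    by rewrite yx eq_sym zy yx' zx eq_sym hx' zx'.
  - by rewrite eyx Esym ezx ezx' Esym eyx'.
  - apply/andP; split.
      by apply/negP => eyz; have := vcM _ _ eyz; rewrite (negbTE yM) (negbTE zM).
    by apply/negP => exx'; have := vcC _ _ exx'; rewrite (negbTE xC) (negbTE x'C).
set C1 := x |: (C :\ z).
have vcC1 : vc C1.
  have side : forall p q, E p q -> p \in C -> (p \in C1) || (q \in C1).
    move=> p q epq pC; rewrite !inE.
    case: (eqVneq p z) => [pz|pz].
      subst p; case: (boolP (q \in C)) => qC.
        have qz : q != z by apply: contraTneq epq => ->; rewrite Eirr.
        by rewrite qz !orbT.
      by rewrite (uniqx _ qC epq) eqxx !orbT.
    by rewrite pC /= !orbT.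
  apply/vcP => a b eab; case/orP: (vcC _ _ eab) => [aC|bC]; first exact: side.
  by rewrite orbC; apply: side bC; rewrite Esym.
have cC1 : #|C1| = #|C|.
  rewrite cardsU1 !inE (negbTE xC) andbF /= (cardsD1 z C) zC.
  by rewrite add1n.
have hC1 := mvc_card hC vcC1 cC1.
have sC1U : C1 \subset U.
  apply/subsetP => a; rewrite !inE => /orP [/eqP ->|/andP [_ aC]]; last exact: (subsetP sCU).
  apply: (subsetP sMU); exact: (subsetP sNM).
have RCC1 : Rel C C1 by apply: Hswap.
have RC1M : Rel C1 M.
  apply: IH => //.
  have : C1 :\: M \subset (C :\: M) :\ z.
    apply/subsetP => a; rewrite !inE => /andP [aM /orP [/eqP ax|/andP [az aC]]].
      by move: aM; rewrite ax (subsetP sNM _ xN).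
    by rewrite az aM aC.
  move/subset_leq_card => h; apply: (leq_trans h).
  have zCM : z \in C :\: M by rewrite inE zM zC.
  by move: hn; rewrite -cCM (cardsD1 z (C :\: M)) zCM.
apply: (Htrans _ C1) => //; exact: (Htrans _ M).
Qed.
End Comb.

Section Alg.
Local Open Scope ring_scope.
Variables (K : fieldType) (s : nat) (E : rel 'I_s).
Hypothesis Hsimple : simple_graph E.
Hypothesis Hunm : unmixed E.
Hypothesis HnoC4 : ~ has_induced_C4 E.

Local Notation mvc := (minimal_vertex_cover E).
Local Notation R := {mpoly K[s]}.

Definition MC := [set C : {set 'I_s} | mvc C].
Definition r := #|MC|.
Definition cov (i : 'I_r) : {set 'I_s} := enum_val i.
Definition mnm_of (C : {set 'I_s}) : 'X_{1..s} := [multinom ((i \in C) : nat) | i < s].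
Definition mm (i : 'I_r) := mnm_of (cov i).
Definition uu (i : 'I_r) : R := 'X_[mm i].

Lemma cov_mvc i : mvc (cov i).
Proof. by have := enum_valP i; rewrite inE. Qed.

Lemma cov_inj : injective cov.
Proof. exact: enum_val_inj. Qed.

Lemma cov_onto C : mvc C -> exists i, cov i = C.
Proof.
move=> hC; have CM : C \in MC by rewrite inE.
by exists (enum_rank_in CM C); rewrite /cov enum_rankK_in.
Qed.

Lemma mnm_ofE C i : mnm_of C i = (i \in C).
Proof. by rewrite mnmE. Qed.

Lemma mnm_of_inj : injective mnm_of.
Proof.
move=> C D h; apply/setP => i; move/mnmP: h => /(_ i).
by rewrite !mnm_ofE; case: (i \in C); case: (i \in D).
Qed.

Lemma mm_inj : injective mm.
Proof. by move=> i j /mnm_of_inj /cov_inj. Qed.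

Lemma mdeg_mnm_of C : mdeg (mnm_of C) = #|C|.
Proof.
rewrite mdegE -sum1_card [RHS]big_mkcond /=; apply: eq_bigr => i _.
by rewrite mnm_ofE; case: (i \in C).
Qed.

Lemma X_mnm_of C : 'X_[mnm_of C] = \prod_(i in C) ('X_i : R).
Proof.
rewrite mprodXE; congr ('X_[_]); apply/mnmP => i.
rewrite mnm_ofE mnm_sumE.
rewrite (eq_bigr (fun j => nat_of_bool (j == i))); last by move=> j _; rewrite mnm1E.
case: (boolP (i \in C)) => iC.
  rewrite (bigD1 i) //= eqxx big1 // => j /andP [_ ji].
  by rewrite (negbTE ji).
rewrite big1 // => j jC; case: eqP => // ji; by move: iC; rewrite -ji jC.
Qed.

Lemma mnm_of_le C (mu : 'X_{1..s}) : (mnm_of C <= mu)%MM = (C \subset [set i | 0 < mu i]%N).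
Proof.
apply/mnm_lepP/subsetP => [h i iC | h i]; rewrite ?inE.
  by have := h i; rewrite mnm_ofE iC.
rewrite mnm_ofE; case: (boolP (i \in C)) => // iC.
by have := h i iC; rewrite inE.
Qed.

Lemma uu_neq0 i : uu i != 0.
Proof.
apply/eqP => h; have := mcoeffX K (mm i) (mm i).
by rewrite -/(uu i) h mcoeff0 eqxx => /eqP; rewrite eq_sym oner_eq0.
Qed.

Definition TT := ('I_r * 'I_r * 'I_s * 'I_s)%type.
Definition swapb (t : TT) : bool :=
  let: (p, q, a, b) := t in [&& a \in cov p, b \notin cov p & cov q == b |: (cov p :\ a)].
Definition W (t : TT) (i : 'I_r) : R :=
  let: (p, q, a, b) := t in
  if swapb t then (if i == p then 'X_b else if i == q then - 'X_a else 0) else 0.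

Lemma swap_neq p q a b : swapb (p, q, a, b) -> p != q.
Proof.
case/and3P => aP bP /eqP hq; apply/eqP => pq; subst q.
by move: bP; rewrite hq !inE eqxx.
Qed.

Lemma mnm_cases (mu : 'X_{1..s}) p q a b j :
  swapb (p, q, a, b) -> (mm p <= mu)%MM -> (mm q <= mu)%MM ->
  ((mu - mm p - U_(b)) + U_(b))%MM j = (mu - mm p)%MM j /\
      ((mu - mm p - U_(b)) + U_(a))%MM j = (mu - mm q)%MM j.
Proof.
case/and3P => aP bP /eqP hq /mnm_lepP hpall /mnm_lepP hqall.
have hA : (a == j) -> (j \in cov p) by move/eqP <-.
have hB : (b == j) -> (j \in cov p) = false by move/eqP <-; apply/negbTE.
have hmuA : (a == j) -> (0 < mu j)%N.
  by move/eqP <-; have := hpall a; rewrite /mm mnm_ofE aP.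
have hmuB : (b == j) -> (0 < mu j)%N.
  by move/eqP <-; have := hqall b; rewrite /mm mnm_ofE hq !inE eqxx.
have hpj := hpall j.
rewrite /mm !mnm_ofE in hpj.
rewrite /mm !mnmE hq !inE (eq_sym j b) (eq_sym j a).
move: hA hB hmuA hmuB hpj.
case: (a == j); case: (b == j); case: (j \in cov p) => //= ; try lia.
Qed.

Lemma swap_mm p q a b : swapb (p, q, a, b) -> (U_(b) + mm p = U_(a) + mm q)%MM.
Proof.
case/and3P => aP bP /eqP hq; apply/mnmP => j.
have hA : (a == j) -> (j \in cov p) by move/eqP <-.
have hB : (b == j) -> (j \in cov p) = false by move/eqP <-; apply/negbTE.
rewrite /mm !mnmE hq !inE (eq_sym j b) (eq_sym j a).
move: hA hB.
case: (a == j); case: (b == j); case: (j \in cov p) => //= ; try lia.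
Qed.

Lemma W_syz t : \sum_i W t i * uu i = 0.
Proof.
case: t => [[[p q] a] b]; rewrite /W.
case hs: (swapb (p, q, a, b)); last by rewrite big1 // => i _; rewrite mul0r.
have pq := swap_neq hs.
have qp : q != p by rewrite eq_sym.
rewrite (bigD1 p) //= eqxx (bigD1 q) //= (negbTE qp) eqxx big1 => [|i /andP [ip iq]]; last first.
  by rewrite (negbTE ip) (negbTE iq) mul0r.
by rewrite addr0 /uu mulNr -!mpolyXD (swap_mm hs) subrr.
Qed.

Lemma W_lin t i : linear_form (W t i).
Proof.
case: t => [[[p q] a] b]; rewrite /W /linear_form.
case: (swapb _); last by rewrite msupp0.
case: (i == p); first by rewrite msuppX /= mdeg1.
case: (i == q); last by rewrite msupp0.
by rewrite (perm_all _ (msuppN _)) msuppX /= mdeg1.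
Qed.

Definition NT (v : 'I_r -> R) := exists c : TT -> R, forall i, v i = \sum_t c t * W t i.

Lemma NT_ext v v' : NT v -> (forall i, v' i = v i) -> NT v'.
Proof. by case=> c hc h; exists c => i; rewrite h hc. Qed.

Lemma NT0 : NT (fun _ => 0).
Proof. by exists (fun _ => 0) => i; rewrite big1 // => t _; rewrite mul0r. Qed.

Lemma NTD v v' : NT v -> NT v' -> NT (fun i => v i + v' i).
Proof.
case=> c hc [c' hc']; exists (fun t => c t + c' t) => i.
by rewrite hc hc' -big_split /=; apply: eq_bigr => t _; rewrite mulrDl.
Qed.

Lemma NTZ (x : R) v : NT v -> NT (fun i => x * v i).
Proof.
case=> c hc; exists (fun t => x * c t) => i.
by rewrite hc mulr_sumr; apply: eq_bigr => t _; rewrite mulrA.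
Qed.

Lemma NTN v : NT v -> NT (fun i => - v i).
Proof.
move=> h; apply: NT_ext (NTZ (-1) h) _ => i; by rewrite mulN1r.
Qed.

Lemma NT_W t : NT (W t).
Proof.
exists (fun t' => if t' == t then 1 else 0) => i.
rewrite (bigD1 t) //= eqxx mul1r big1 ?addr0 // => t' /negbTE ->; by rewrite mul0r.
Qed.

Lemma NT_sum (I : Type) (l : seq I) (F : I -> 'I_r -> R) :
  (forall x, NT (F x)) -> NT (fun i => \sum_(x <- l) F x i).
Proof.
move=> h; elim: l => [|x l IH].
  by apply: NT_ext NT0 _ => i; rewrite big_nil.
by apply: NT_ext (NTD (h x) IH) _ => i; rewrite big_cons.
Qed.

Lemma NT_syz v : NT v -> \sum_i v i * uu i = 0.
Proof.
case=> c hc.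
rewrite (eq_bigr (fun i => \sum_t c t * (W t i * uu i))); last first.
  by move=> i _; rewrite hc mulr_suml; apply: eq_bigr => t _; rewrite mulrA.
rewrite exchange_big big1 // => t _; by rewrite -mulr_sumr W_syz mulr0.
Qed.

Definition delta (mu : 'X_{1..s}) (p : 'I_r) (i : 'I_r) : R :=
  if i == p then 'X_[mu - mm p] else 0.

Lemma NT_swap mu p q a b : swapb (p, q, a, b) -> (mm p <= mu)%MM -> (mm q <= mu)%MM ->
  NT (fun i => delta mu p i - delta mu q i).
Proof.
move=> hs hp hq.
apply: NT_ext (NTZ ('X_[mu - mm p - U_(b)]) (NT_W (p, q, a, b))) _ => i.
rewrite /W hs /delta.
have pq := swap_neq hs.
case: (eqVneq i p) => [->|ip].
  rewrite (negbTE pq) subr0 -mpolyXD; congr ('X_[_]); apply/mnmP => j.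
  by case: (mnm_cases j hs hp hq).
case: (eqVneq i q) => [iq|iq]; last by rewrite subr0 mulr0.
idtac.
rewrite sub0r mulrN -mpolyXD; congr (- 'X_[_]); apply/mnmP => j.
by case: (mnm_cases j hs hp hq).
Qed.

Lemma mcoeff_sumE (I : Type) (l : seq I) (P : pred I) (F : I -> R) mu :
  (\sum_(x <- l | P x) F x)@_mu = \sum_(x <- l | P x) (F x)@_mu.
Proof.
elim/big_rec2: _ => [|x y p _ <-]; first by rewrite mcoeff0.
by rewrite mcoeffD.
Qed.

Lemma NT_delta mu p q : (mm p <= mu)%MM -> (mm q <= mu)%MM ->
  NT (fun i => delta mu p i - delta mu q i).
Proof.
move=> hp hq.
pose U := [set i | 0 < mu i]%N.
pose Rel := fun P Q : {set 'I_s} => forall p' q', cov p' = P -> cov q' = Q ->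
  NT (fun i => delta mu p' i - delta mu q' i).
have := @chain s E Hsimple Hunm HnoC4 U Rel.
have hp' : cov p \subset U by rewrite -mnm_of_le.
have hq' : cov q \subset U by rewrite -mnm_of_le.
move=> /(_ _ _ _ (cov p) (cov q) (cov_mvc p) (cov_mvc q) hp' hq').
apply => //.
- move=> P _ p' q' e1 e2; have pq := cov_inj (etrans e1 (esym e2)); subst q'.
  by apply: NT_ext NT0 _ => i; rewrite subrr.
- move=> P Q Q' hQ h1 h2 p' q' e1 e2; case: (cov_onto hQ) => j ej.
  apply: NT_ext (NTD (h1 p' j e1 ej) (h2 j q' ej e2)) _ => i.
  by rewrite addrA subrK.
- move=> P a b hP hQ aP bP sPU sQU p' q' e1 e2.
  apply: (@NT_swap mu p' q' a b).
  + by rewrite /swapb /= e1 e2 aP bP eqxx.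
  + by rewrite /mm e1 mnm_of_le.
  + by rewrite /mm e2 mnm_of_le.
Qed.

Lemma NT_all (i0 : 'I_r) v : \sum_i v i * uu i = 0 -> NT v.
Proof.
move=> hv.
pose kb := (\max_(i < r) msize (v i))%N.
have hvE : forall i, v i = \sum_(n : 'X_{1..s < kb}) (v i)@_n *: 'X_[n].
  move=> i; apply: mpolywE; exact: (leq_bigmax i).
pose rho (mu : 'X_{1..s}) : 'I_r := odflt i0 [pick p | (mm p <= mu)%MM].
have hrho : forall mu i, (mm i <= mu)%MM -> (mm (rho mu) <= mu)%MM.
  move=> mu i hi; rewrite /rho; case: pickP => [p' hp|h] //=.
  by move: (h i); rewrite hi.
pose v' q := \sum_i \sum_(n : 'X_{1..s < kb})
   (if q == rho (n + mm i)%MM then (v i)@_n *: 'X_[(n + mm i) - mm q] else 0).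
have step1 : NT (fun q => v q - v' q).
  have h : NT (fun q => \sum_i \sum_(n : 'X_{1..s<kb}) ((v i)@_n)%:MP *
       (delta (n + mm i) i q - delta (n + mm i) (rho (n + mm i)%MM) q)).
    apply: NT_sum => i; apply: NT_sum => n; apply: NTZ; apply: NT_delta.
      exact: lem_addl.
    exact: (hrho _ _ (lem_addl _ _)).
  apply: NT_ext h _ => q.
  have e1 : \sum_i \sum_(n : 'X_{1..s<kb}) ((v i)@_n)%:MP * delta (n + mm i) i q = v q.
    rewrite (bigD1 q) //= [X in _ + X]big1 ?addr0; last first.
      move=> i iq; apply: big1 => n _; rewrite /delta eq_sym (negbTE iq); by rewrite mulr0.
    rewrite [RHS]hvE; apply: eq_bigr => n _.
    by rewrite /delta eqxx addmK mul_mpolyC.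
  have e2 : \sum_i \sum_(n : 'X_{1..s<kb}) ((v i)@_n)%:MP * delta (n + mm i) (rho (n + mm i)%MM) q = v' q.
    apply: eq_bigr => i _; apply: eq_bigr => n _; rewrite /delta.
    by case: eqP => [e|_]; [rewrite -e mul_mpolyC | rewrite mulr0].
  rewrite -e1 -e2 -sumrB; apply: eq_bigr => i _; rewrite -sumrB; apply: eq_bigr => n _.
  by rewrite mulrBr.
have syz' : \sum_q v' q * uu q = 0.
  have := NT_syz step1.
  rewrite (eq_bigr (fun q => v q * uu q - v' q * uu q)); last by move=> q _; rewrite mulrBl.
  by rewrite sumrB hv sub0r => /eqP; rewrite oppr_eq0 => /eqP.
have coef0 : forall q mu, rho mu != q -> (v' q * uu q)@_mu = 0.
  move=> q mu hmu; rewrite /v' mulr_suml mcoeff_sumE big1 // => i _.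
  rewrite mulr_suml mcoeff_sumE big1 // => n _.
  case: eqP => [hq|_]; last by rewrite mul0r raddf0.
  rewrite /uu -scalerAl -mpolyXD mcoeffZ mcoeffX submK; last first.
    by rewrite hq; apply: (hrho _ _ (lem_addl _ _)).
  case: eqP => [e|]; last by rewrite mulr0.
  by move: hmu; rewrite -e -hq eqxx.
have v'0 : forall q, v' q = 0.
  move=> q; have : v' q * uu q = 0.
    apply/mpolyP => mu; rewrite mcoeff0.
    case: (eqVneq (rho mu) q) => [hq|hq]; last exact: coef0.
    have : (\sum_j v' j * uu j)@_mu = 0 by rewrite syz' mcoeff0.
    rewrite mcoeff_sumE (bigD1 q) //= big1 ?addr0 // => j jq; apply: coef0.
    by rewrite hq eq_sym.
  by move/eqP; rewrite mulf_eq0 (negbTE (uu_neq0 q)) orbF => /eqP.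
by apply: NT_ext step1 _ => q; rewrite v'0 subr0.
Qed.
End Alg.

Theorem theorem5p13 (K : fieldType) (s : nat) (E : rel 'I_s) :
  simple_graph E -> unmixed E -> ~ has_induced_C4 E ->
  linearly_presented (cover_ideal K E).
Proof.
move=> Hs Hu Hc.
have vcT : vertex_cover E [set: 'I_s].
  by apply/forallP => x; apply/forallP => y; rewrite inE implybT.
case: (exists_mvc vcT) => C0 hC0 _.
case: (cov_onto hC0) => i0 _.
exists (r E), (@mm s E).
split.
- move=> p; split => [[k [a [g [hg ->]]]]|[k [a [g [hg ->]]]]]; exists k, a, g; split => // j.
    case: (hg j) => C [hC ->]; case: (cov_onto hC) => i ei; exists i.
    by rewrite /mm ei X_mnm_of.
  case: (hg j) => i ->; exists (cov i); split; first exact: cov_mvc.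
  by rewrite /mm X_mnm_of.
- move=> i [k [a [g [hg he]]]].
  have := congr1 (mcoeff (mm i)) he.
  rewrite mcoeffX eqxx mcoeff_sumE big1 => [|l _].
    by move/eqP; rewrite oner_eq0.
  case: (hg l) => j ji ->.
  apply: memN_msupp_eq0; rewrite (perm_mem (msuppMX _ _)); apply/negP => /mapP [m' _ e].
  have : mdeg (mm i) = (mdeg (mm j) + mdeg m')%N by rewrite e mdegD.
  rewrite /mm !mdeg_mnm_of (Hu _ _ (cov_mvc i) (cov_mvc j)).
  move/eqP; rewrite -{1}(addn0 #|cov j|) eqn_add2l eq_sym mdeg_eq0 => /eqP m'0.
  move: e; rewrite m'0 addm0 => /mm_inj ij.
  by move: ji; rewrite ij eqxx.
- move=> i j; rewrite /mm !mdeg_mnm_of; exact: Hu (cov_mvc i) (cov_mvc j).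
- exists #|{: TT E}|, (fun l => W K (enum_val l)).
  split; first by move=> l; exact: W_syz.
  split; first by move=> l i; exact: W_lin.
  move=> v hv; have [c hc] := NT_all Hs Hu Hc i0 hv.
  exists (fun l => c (enum_val l)) => i; rewrite hc.
  by rewrite -(big_enum_val (fun t => (c t * W K t i)%R)).
Qed.
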